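(* Assume that $\Pr[\mathit{QH} > 1/\Delta] \leq \varepsilon$. Then the procedure $\mathbf{Detect}(U,\Delta,\varepsilon)$ accepts $\ket{\psi}$ with probability $\|\psi\|^2-\delta_0^2-\mathrm{O}(\varepsilon)$, and with probability $0$ if $|\delta_0|=\|\psi\|$. In addition, the number of applications of the controlled operator $\text{c-}U$ is $\mathrm{O}(\log(1/\varepsilon)/\Delta)$.
   Context: Let $U$ be a unitary matrix with real entries. Its eigenvalues are $1$, $-1$, and pairs of conjugate complex numbers $(e^{i\alpha_j},e^{-i\alpha_j})$ with $0<\alpha_j<\pi$, $1\le j\le J$. Let $\ket{\psi}$ be a vector with real entries and norm at most one; it decomposes uniquely as $\ket{\psi}=\delta_0\ket{w_0}+\sum_{1\le j\le J}\delta_j(\ket{w_j^+}+\ket{w_j^-})+\delta_{-1}\ket{w_{-1}}$, where $\delta_0,\delta_{-1},\delta_j$ are reals, $\ket{w_0}$ is a unit eigenvector of $U$ with eigenvalue $1$, $\ket{w_{-1}}$ a unit eigenvector with eigenvalue $-1$, and $\ket{w_j^\pm}$ unit eigenvectors with eigenvalues $e^{\pm i\alpha_j}$, $\ket{w_j^-}=\overline{\ket{w_j^+}}$. Let $\mathit{QH}$ be the random variable taking value $1/\alpha_j$ with probability $2\delta_j^2$, value $1/\pi$ with probability $\delta_{-1}^2$, and $0$ otherwise (probabilities sum to $\|\psi\|^2$). Let $\mathbf{Estimate}$ be the phase estimation circuit (Kitaev; Cleve et al.) which, given an eigenvector of $U$ with eigenvalue $e^{i\alpha}$, determines $\alpha\in(-\pi,\pi]$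 with precision $\Delta$ and error probability at most $1/3$, determines $\alpha=0$ with probability $1$ on a $1$-eigenvector, and uses $\mathrm{O}(1/\Delta)$ calls to $\text{c-}U$ and its inverse. The procedure $\mathbf{Detect}(U,\Delta,\varepsilon)$ on input $\ket{\psi}$: apply $\Theta(\log(1/\varepsilon))$ times $\mathbf{Estimate}$ for $U$ with precision $\Delta$ to the same state $\ket{\psi}$; if at least one estimated phase is nonzero, accept, otherwise reject. *)

(* Defs.v *)
From mathcomp Require Import all_boot all_order all_algebra complex.
From mathcomp Require Import reals exp trigo.
Set Implicit Arguments. Unset Strict Implicit. Unset Printing Implicit Defensive.
Import Order.TTheory GRing.Theory Num.Theory.
Local Open Scope ring_scope.
Local Open Scope complex_scope.

Section Defs.
Variable R : realType.

Definition expi (a : R) : R[i] := cos a +i* sin a.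

Definition sqnorm n (v : 'cV[R[i]]_n) : R :=
  \sum_(i < n) (complex.Re (v i 0) ^+ 2 + complex.Im (v i 0) ^+ 2).

Definition conjv m n (A : 'M[R[i]]_(m, n)) : 'M[R[i]]_(m, n) := map_mx Num.conj A.
Definition adjoint m n (A : 'M[R[i]]_(m, n)) : 'M[R[i]]_(n, m) := (conjv A)^T.

Definition real_mx m n (A : 'M[R[i]]_(m, n)) : Prop := forall i j, complex.Im (A i j) = 0.

Definition cdist (a b : R) : R := Num.min `|a - b| (2 * pi - `|a - b|).

(* Pr[QH > 1/Delta] for the random variable QH of the paper:
   QH = 1/alpha_j w.p. 2 delta_j^2, 1/pi w.p. delta_{-1}^2, 0 otherwise. *)
Definition QH_tail J (alpha delta : 'I_J -> R) (deltam Delta : R) : R :=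
  \sum_(j < J | 1 / alpha j > 1 / Delta) 2 * delta j ^+ 2
  + (if 1 / pi > 1 / Delta then deltam ^+ 2 else 0).

(* An execution of Estimate followed by measurement of its output register is
   described by Kraus (branch) operators A k : 'M_n acting on the system register,
   each labelled with the estimated phase est k.  Running Estimate k times on
   fresh registers and measuring all outputs, the outcome sequence s occurs with
   probability ||A (s (k-1)) ... A (s 0) psi||^2. *)
Definition kraus_seq n K k (A : 'I_K -> 'M[R[i]]_n) (s : {ffun 'I_k -> 'I_K})
  : 'M[R[i]]_n := \prod_(t < k) A (s (rev_ord t)).

(* Probability that Detect (k repetitions of Estimate) accepts psi:
   at least one estimated phase is nonzero. *)
Definition detect_accept_prob n K k (A : 'I_K -> 'M[R[i]]_n) (est : 'I_K -> R)
  (psi : 'cV[R[i]]_n) : R :=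
  \sum_(s : {ffun 'I_k -> 'I_K} | [exists t, est (s t) != 0])
     sqnorm (kraus_seq A s *m psi).

End Defs.

(* Main.v *)
Require Import Defs.
From mathcomp Require Import all_boot all_order all_algebra complex.
From mathcomp Require Import reals exp trigo.
From mathcomp Require Import ring lra.
Import Order.TTheory GRing.Theory Num.Theory.
Set Implicit Arguments. Unset Strict Implicit. Unset Printing Implicit Defensive.
Local Open Scope ring_scope.
Local Open Scope complex_scope.

Section Lin.
Variable R : realType.
Implicit Types z w : R[i].

Definition ip n (u v : 'cV[R[i]]_n) : R[i] := \sum_i Num.conj (u i 0) * v i 0.

Lemma conj_mul_self z : Num.conj z * z = ((complex.Re z)^+2 + (complex.Im z)^+2)%:C.
Proof. case: z => a b; simpc; congr (_ +i* _); rewrite /= ?expr2 //. all: by rewrite mulrC subrr. Qed.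

Lemma sqnormC n (v : 'cV[R[i]]_n) : (sqnorm v)%:C = ip v v.
Proof.
rewrite /sqnorm /ip rmorph_sum; apply: eq_bigr => i _; by rewrite conj_mul_self.
Qed.

Lemma sqnorm_ge0 n (v : 'cV[R[i]]_n) : 0 <= sqnorm v.
Proof. by apply: sumr_ge0 => i _; rewrite addr_ge0 ?sqr_ge0. Qed.

Lemma ipE n (u v : 'cV[R[i]]_n) : ip u v = (adjoint u *m v) 0 0.
Proof. by rewrite !mxE; apply: eq_bigr => i _; rewrite !mxE. Qed.

Lemma adjoint_mul m p q (M : 'M[R[i]]_(m, p)) (N : 'M[R[i]]_(p, q)) :
  adjoint (M *m N) = adjoint N *m adjoint M.
Proof. by rewrite /adjoint /conjv map_mxM trmx_mul. Qed.

Lemma ip_unitary n (U : 'M[R[i]]_n) (u v : 'cV[R[i]]_n) :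
  adjoint U *m U = 1%:M -> ip (U *m u) (U *m v) = ip u v.
Proof.
move=> HU; rewrite !ipE adjoint_mul -mulmxA (mulmxA (adjoint U)) HU mul1mx //.
Qed.

Lemma ip_scalel n c (u v : 'cV[R[i]]_n) : ip (c *: u) v = Num.conj c * ip u v.
Proof. rewrite /ip mulr_sumr; apply: eq_bigr => i _; by rewrite mxE rmorphM mulrA. Qed.

Lemma ip_scaler n c (u v : 'cV[R[i]]_n) : ip u (c *: v) = c * ip u v.
Proof. rewrite /ip mulr_sumr; apply: eq_bigr => i _; by rewrite mxE mulrCA. Qed.

Lemma ip_suml n (I : finType) (F : I -> 'cV[R[i]]_n) v :
  ip (\sum_i F i) v = \sum_i ip (F i) v.
Proof.
rewrite /ip exchange_big /=; apply: eq_bigr => j _.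
by rewrite summxE rmorph_sum mulr_suml.
Qed.

Lemma ip_sumr n (I : finType) (F : I -> 'cV[R[i]]_n) u :
  ip u (\sum_i F i) = \sum_i ip u (F i).
Proof.
rewrite /ip exchange_big /=; apply: eq_bigr => j _.
by rewrite summxE mulr_sumr.
Qed.

Lemma pyth n (I : finType) (F : I -> 'cV[R[i]]_n) :
  (forall i j, i != j -> ip (F i) (F j) = 0) ->
  sqnorm (\sum_i F i) = \sum_i sqnorm (F i).
Proof.
move=> Horth; apply: complexI; rewrite sqnormC rmorph_sum ip_suml.
apply: eq_bigr => i _; rewrite ip_sumr (bigD1 i) //= big1 ?addr0 ?sqnormC //.
by move=> j Hj; rewrite Horth // eq_sym.
Qed.

End Lin.
Lemma sumC (R : realType) (I : finType) (F : I -> R) :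
  ((\sum_i F i)%:C : R[i]) = \sum_i (F i)%:C.
Proof. by rewrite rmorph_sum. Qed.

Section Eig.
Variable R : realType.

Lemma conj_expi (a : R) : Num.conj (expi a) = expi (- a).
Proof. by rewrite /expi cosN sinN. Qed.

Lemma expi_norm (a : R) : Num.conj (expi a) * expi a = 1.
Proof. by rewrite conj_mul_self /= cos2Dsin2. Qed.

Lemma expi0 : expi 0 = 1 :> R[i].
Proof. by rewrite /expi cos0 sin0. Qed.

Lemma expipi : expi pi = -1 :> R[i].
Proof. by rewrite /expi cospi sinpi; apply/eqP; rewrite eq_complex /= oppr0 !eqxx. Qed.

Lemma eig_orth n (U : 'M[R[i]]_n) (u v : 'cV[R[i]]_n) (l m : R[i]) :
  adjoint U *m U = 1%:M -> U *m u = l *: u -> U *m v = m *: v ->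
  Num.conj l * l = 1 -> l != m -> ip u v = 0.
Proof.
move=> HU Hu Hv Hl Hlm.
have E : ip u v = Num.conj l * m * ip u v.
  by rewrite -{1}(ip_unitary u v HU) Hu Hv ip_scalel ip_scaler mulrA.
have : (1 - Num.conj l * m) * ip u v = 0 by rewrite mulrBl mul1r -E subrr.
move/eqP; rewrite mulf_eq0 => /orP[]; last by move/eqP.
rewrite subr_eq0 => /eqP H1.
exfalso; move/eqP: Hlm; apply.
by rewrite -[l]mulr1 H1 mulrA (mulrC l) Hl mul1r.
Qed.

Lemma sqnorm_scale n (r : R) (v : 'cV[R[i]]_n) :
  sqnorm (r%:C *: v) = r ^+ 2 * sqnorm v.
Proof.
rewrite /sqnorm mulr_sumr; apply: eq_bigr => i _; rewrite mxE.
case: (v i 0) => a b /=; rewrite !mul0r !subr0 !addr0 !exprMn mulrDr //.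
Qed.

Lemma sqnorm_conjv n (v : 'cV[R[i]]_n) : sqnorm (conjv v) = sqnorm v.
Proof.
rewrite /sqnorm; apply: eq_bigr => i _; rewrite mxE.
case: (v i 0) => a b /=; by rewrite sqrrN.
Qed.

Lemma conjvK m p (M : 'M[R[i]]_(m, p)) : conjv (conjv M) = M.
Proof. by apply/matrixP => i j; rewrite !mxE conjCK. Qed.

Lemma conjv_mul m p q (M : 'M[R[i]]_(m, p)) (N : 'M[R[i]]_(p, q)) :
  conjv (M *m N) = conjv M *m conjv N.
Proof. by rewrite /conjv map_mxM. Qed.

Lemma conjv_scale m p c (M : 'M[R[i]]_(m, p)) : conjv (c *: M) = Num.conj c *: conjv M.
Proof. by apply/matrixP => i j; rewrite !mxE rmorphM. Qed.

Lemma real_conjv m p (M : 'M[R[i]]_(m, p)) : real_mx M -> conjv M = M.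
Proof.
move=> HM; apply/matrixP => i j; rewrite !mxE; move: (HM i j).
case: (M i j) => a b /= ->; apply/eqP; rewrite eq_complex /= eqxx /=; apply/eqP; exact: oppr0.
Qed.

Lemma expi_inj (a b : R) : - pi < a <= pi -> - pi < b <= pi -> expi a = expi b -> a = b.
Proof.
move=> /andP[Ha1 Ha2] /andP[Hb1 Hb2] [Hc Hs].
have cinj (x y : R) : 0 <= x <= pi -> 0 <= y <= pi -> cos x = cos y -> x = y.
  move=> Hx Hy; apply: cos_inj; by rewrite in_itv.
have sneg (x : R) : - pi < x < 0 -> sin x < 0.
  move=> /andP[H1 H2]; rewrite -oppr_gt0 -sinN sin_gt0_pi //.
  by rewrite oppr_gt0 H2 /= ltrNl.
have spos (x : R) : 0 <= x <= pi -> 0 <= sin x by move=> H; apply: sin_ge0_pi.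
case: (leP 0 a) => Ha; case: (leP 0 b) => Hb.
- by apply: cinj; rewrite ?Ha ?Ha2 ?Hb ?Hb2.
- have := sneg b; rewrite Hb Hb1 => /(_ isT); rewrite -Hs.
  by have := spos a; rewrite Ha Ha2 => /(_ isT) /le_lt_trans H /H; rewrite ltxx.
- have := sneg a; rewrite Ha Ha1 => /(_ isT); rewrite Hs.
  by have := spos b; rewrite Hb Hb2 => /(_ isT) /le_lt_trans H /H; rewrite ltxx.
- apply/eqP; rewrite -eqr_opp; apply/eqP; apply: cinj; last by rewrite !cosN.
  + by rewrite oppr_ge0 ltW //= lerNl ltW.
  + by rewrite oppr_ge0 ltW //= lerNl ltW.
Qed.

End Eig.

Definition fcons (T : Type) k (x : T) (s : {ffun 'I_k -> T}) : {ffun 'I_k.+1 -> T} :=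
  [ffun i => if unlift ord0 i is Some j then s j else x].
Arguments fcons {T k}.
Lemma fcons0 T k x (s : {ffun 'I_k -> T}) : fcons x s ord0 = x.
Proof. by rewrite ffunE unlift_none. Qed.
Lemma fconsS T k x (s : {ffun 'I_k -> T}) j : fcons x s (lift ord0 j) = s j.
Proof. by rewrite ffunE liftK. Qed.
Lemma sum_ffunS (V : zmodType) (T : finType) k (F : {ffun 'I_k.+1 -> T} -> V) :
  \sum_s F s = \sum_(x : T) \sum_(s : {ffun 'I_k -> T}) F (fcons x s).
Proof.
rewrite pair_big /=.
rewrite (reindex (fun p : T * {ffun 'I_k -> T} => fcons p.1 p.2)) //=.
exists (fun s : {ffun 'I_k.+1 -> T} => (s ord0, [ffun j => s (lift ord0 j)])).
  move=> [x s] _ /=; rewrite fcons0; congr (_, _); apply/ffunP => j.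
  by rewrite ffunE fconsS.
move=> s _; apply/ffunP => i; rewrite ffunE /=.
by case: unliftP => [j|] ->; rewrite ?ffunE.
Qed.

Lemma sum_sub_le (R : numDomainType) (I : finType) (P Q : pred I) (F : I -> R) :
  (forall i, 0 <= F i) -> (forall i, P i -> Q i) ->
  \sum_(i | P i) F i <= \sum_(i | Q i) F i.
Proof.
move=> H0 HPQ; rewrite [X in X <= _]big_mkcond [X in _ <= X]big_mkcond.
apply: ler_sum => i _; case: (boolP (P i)) => HP; first by rewrite (HPQ _ HP).
by case: (Q i).
Qed.

Lemma sum_cond (V : zmodType) (I : finType) (P : pred I) (F : I -> V) :
  \sum_(i | P i) F i = \sum_i (if P i then F i else 0).
Proof. exact: big_mkcond. Qed.

Section Kraus.
Variables (R : realType) (n K : nat) (U : 'M[R[i]]_n) (A : 'I_K -> 'M[R[i]]_n)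
  (est : 'I_K -> R).
Hypothesis HU : adjoint U *m U = 1%:M.
Hypothesis Hcomp : \sum_(x < K) adjoint (A x) *m A x = 1%:M.
Hypothesis Hcomm : forall x, A x *m U = U *m A x.

Definition Tot k (v : 'cV[R[i]]_n) :=
  \sum_(s : {ffun 'I_k -> 'I_K}) sqnorm (kraus_seq A s *m v).
Definition Rej k (v : 'cV[R[i]]_n) :=
  \sum_(s : {ffun 'I_k -> 'I_K} | [forall t, est (s t) == 0]) sqnorm (kraus_seq A s *m v).

Lemma kraus_fcons k x (s : {ffun 'I_k -> 'I_K}) :
  kraus_seq A (fcons x s) = kraus_seq A s *m A x.
Proof.
rewrite /kraus_seq big_ord_recr /= mulmxE.
have -> : rev_ord (@ord_max k) = ord0 by apply: val_inj => /=; rewrite subnn.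
rewrite fcons0; congr (_ * _); apply: eq_bigr => t _.
have -> : rev_ord (widen_ord (leqnSn k) t) = lift ord0 (rev_ord t).
  by apply: val_inj => /=; rewrite /bump /= add1n subSS subnSK.
by rewrite fconsS.
Qed.

Lemma complete (v : 'cV[R[i]]_n) : \sum_x sqnorm (A x *m v) = sqnorm v.
Proof.
apply: complexI; rewrite sumC sqnormC ipE.
under eq_bigr => x _ do rewrite sqnormC ipE adjoint_mul -mulmxA (mulmxA (adjoint (A x))).
rewrite -summxE -mulmx_sumr -mulmx_suml Hcomp mul1mx //.
Qed.

Lemma Tot_eq k v : Tot k v = sqnorm v.
Proof.
elim: k v => [|k IH] v.
  rewrite /Tot.
  have E (s : {ffun 'I_0 -> 'I_K}) : kraus_seq A s = 1 by rewrite /kraus_seq big_ord0.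
  under eq_bigr => s _ do rewrite E mul1mx.
  by rewrite sumr_const card_ffun (card_ord 0) expn0.
rewrite /Tot sum_ffunS -(complete v); apply: eq_bigr => x _.
rewrite -(IH (A x *m v)); apply: eq_bigr => s _.
by rewrite kraus_fcons mulmxA.
Qed.

Lemma forall_fcons k x (s : {ffun 'I_k -> 'I_K}) :
  [forall t, est (fcons x s t) == 0] = (est x == 0) && [forall t, est (s t) == 0].
Proof.
apply/forallP/andP.
  move=> H; split; first by have := H ord0; rewrite fcons0.
  by apply/forallP => t; have := H (lift ord0 t); rewrite fconsS.
case=> Hx /forallP Hs t; rewrite ffunE.
by case: unliftP => [j|] _.
Qed.

Lemma Rej_rec k v :
  Rej k.+1 v = \sum_(x | est x == 0) Rej k (A x *m v).
Proof.
rewrite /Rej [RHS]sum_cond [LHS]sum_cond sum_ffunS;  apply: eq_bigr => x _.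
case: (boolP (est x == 0)) => Hx.
  rewrite [RHS]sum_cond; apply: eq_bigr => s _.
  by rewrite forall_fcons Hx /= kraus_fcons mulmxA.
by apply: big1 => s _; rewrite forall_fcons (negbTE Hx).
Qed.

Lemma Rej_ge0 k v : 0 <= Rej k v.
Proof. by apply: sumr_ge0 => s _; apply: sqnorm_ge0. Qed.

Lemma Rej_le k v : Rej k v <= sqnorm v.
Proof.
rewrite -(Tot_eq k v) /Rej /Tot.
by apply: sum_sub_le => // s; apply: sqnorm_ge0.
Qed.

Lemma kraus_comm k (s : {ffun 'I_k -> 'I_K}) :
  kraus_seq A s *m U = U *m kraus_seq A s.
Proof.
rewrite /kraus_seq; apply: (big_ind (fun M : 'M_n => M *m U = U *m M)).
- by rewrite mul1mx mulmx1.
- by move=> M N HM HN; rewrite -mulmxE -mulmxA HN mulmxA HM mulmxA.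
- by move=> t _; apply: Hcomm.
Qed.

Lemma accE k psi : detect_accept_prob k A est psi = sqnorm psi - Rej k psi.
Proof.
rewrite -(Tot_eq k psi) /Tot /Rej /detect_accept_prob.
rewrite [in RHS](bigID (fun s : {ffun 'I_k -> 'I_K} => [exists t, est (s t) != 0])) /=.
rewrite [X in _ = _ - X](eq_bigl (fun s : {ffun 'I_k -> 'I_K} => ~~ [exists t, est (s t) != 0])) ?addrK //.
by move=> s; rewrite negb_exists; apply: eq_forallb => t; rewrite negbK.
Qed.

Hypothesis Hfix : forall (v : 'cV[R[i]]_n), U *m v = v ->
  \sum_(x < K | est x != 0) sqnorm (A x *m v) = 0.

Lemma Rej_fix k v : U *m v = v -> Rej k v = sqnorm v.
Proof.
elim: k v => [|k IH] v Hv.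
  rewrite -(Tot_eq 0 v) /Rej /Tot; apply: eq_bigl => s.
  by apply/forallP => -[].
rewrite Rej_rec.
have E : \sum_(x | est x == 0) Rej k (A x *m v) = \sum_(x | est x == 0) sqnorm (A x *m v).
  apply: eq_bigr => x _; apply: IH; by rewrite mulmxA -Hcomm -mulmxA Hv.
rewrite E -(complete v) [in RHS](bigID (fun x => est x != 0)) /= Hfix // add0r.
by apply: eq_bigl => x; rewrite negbK.
Qed.

Variable Delta : R.
Hypothesis HEst : forall (v : 'cV[R[i]]_n) (a : R), - pi < a <= pi ->
        U *m v = expi a *: v -> sqnorm v = 1 ->
        \sum_(x < K | cdist (est x) a >= Delta) sqnorm (A x *m v) <= 1 / 3.

Lemma third v a : - pi < a <= pi -> U *m v = expi a *: v -> Delta <= cdist 0 a ->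
  \sum_(x | est x == 0) sqnorm (A x *m v) <= 1 / 3 * sqnorm v.
Proof.
move=> Ha Hv HD.
have Hsub : forall w : 'cV[R[i]]_n,
  \sum_(x | est x == 0) sqnorm (A x *m w) <=
  \sum_(x | cdist (est x) a >= Delta) sqnorm (A x *m w).
  move=> w; apply: sum_sub_le => x; first exact: sqnorm_ge0.
  by move/eqP => ->.
have := sqnorm_ge0 v; rewrite le_eqVlt => /orP[/eqP H0|Hpos].
  rewrite -H0 mulr0; apply: (le_trans (y := \sum_x sqnorm (A x *m v))).
    by apply: sum_sub_le => // x; apply: sqnorm_ge0.
  by rewrite complete H0.
set c := (Num.sqrt (sqnorm v))^-1.
have Hc2 : c ^+ 2 * sqnorm v = 1.
  by rewrite /c exprVn sqr_sqrtr ?mulVf // ?lt0r_neq0 // ltW.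
have Hv' : U *m (c%:C *: v) = expi a *: (c%:C *: v).
  by rewrite -scalemxAr Hv !scalerA mulrC.
have Hn' : sqnorm (c%:C *: v) = 1 by rewrite sqnorm_scale.
have := HEst Ha Hv' Hn'.
under eq_bigr => x _ do rewrite -scalemxAr sqnorm_scale.
rewrite -mulr_sumr => H.
have H2 : c ^+ 2 * \sum_(x | est x == 0) sqnorm (A x *m v) <= 1 / 3.
  apply: le_trans H; rewrite ler_wpM2l ?sqr_ge0 //.
rewrite -[X in X <= _]mulr1 -{1}Hc2 mulrA [_ * c ^+ 2]mulrC.
by rewrite ler_wpM2r // ltW.
Qed.

Lemma Rej_small k v a : - pi < a <= pi -> U *m v = expi a *: v -> Delta <= cdist 0 a ->
  Rej k v <= (1 / 3) ^+ k * sqnorm v.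
Proof.
move=> Ha; elim: k v => [|k IH] v Hv HD.
  by rewrite expr0 mul1r Rej_le.
rewrite Rej_rec.
apply: (le_trans (y := \sum_(x | est x == 0) (1/3) ^+ k * sqnorm (A x *m v))).
  apply: ler_sum => x _; apply: IH => //.
  by rewrite mulmxA -Hcomm -mulmxA Hv scalemxAr.
rewrite -mulr_sumr exprSr -mulrA ler_wpM2l ?exprn_ge0 //.
  by rewrite mul1r invr_ge0 ler0n.
exact: third Ha Hv HD.
Qed.

Lemma eig_family (I : finType) (F : I -> 'cV[R[i]]_n) (ang : I -> R) (M : 'M[R[i]]_n) :
  M *m U = U *m M ->
  (forall i, U *m F i = expi (ang i) *: F i) ->
  (forall i j, i != j -> expi (ang i) != expi (ang j)) ->
  sqnorm (M *m \sum_i F i) = \sum_i sqnorm (M *m F i).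
Proof.
move=> HM HF Hd; rewrite mulmx_sumr; apply: pyth => i j Hij.
apply: (eig_orth HU (l := expi (ang i)) (m := expi (ang j))).
- by rewrite mulmxA -HM -mulmxA HF scalemxAr.
- by rewrite mulmxA -HM -mulmxA HF scalemxAr.
- exact: expi_norm.
- exact: Hd.
Qed.

Lemma Rej_sum k (I : finType) (F : I -> 'cV[R[i]]_n) (ang : I -> R) :
  (forall i, U *m F i = expi (ang i) *: F i) ->
  (forall i j, i != j -> expi (ang i) != expi (ang j)) ->
  Rej k (\sum_i F i) = \sum_i Rej k (F i).
Proof.
move=> HF Hd; rewrite /Rej [RHS]exchange_big /=; apply: eq_bigr => s _.
by apply: eig_family => //; apply: kraus_comm.
Qed.

End Kraus.

Lemma big_opt (V : zmodType) (T : finType) (F : option T -> V) :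
  \sum_(o : option T) F o = F None + \sum_(t : T) F (Some t).
Proof.
rewrite -big_enum /= -[in RHS]big_enum /=.
rewrite (perm_big (None :: map Some (enum T))).
  by rewrite big_cons big_map.
apply: uniq_perm.
- by rewrite enum_uniq.
- rewrite /= map_inj_uniq ?enum_uniq; last by move=> ? ? [].
  by rewrite andbT; apply/mapP => -[].
- by case=> [t|]; rewrite mem_enum inE //= map_f // mem_enum.
Qed.

Lemma pow3 (R : realType) (eps : R) (k : nat) :
  0 < eps -> ln (1 / eps) / ln 3 <= k%:R -> (1 / 3) ^+ k <= eps.
Proof.
move=> He Hk.
have l3 : 0 < ln (3 : R) by apply: ln_gt0; rewrite ltr1n.
rewrite ler_pdivrMr // mulr_natl -lnXn // in Hk.
rewrite ler_ln ?posrE ?exprn_gt0 ?divr_gt0 // in Hk.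
rewrite expr_div_n expr1n div1r -[eps]invrK -[X in _ <= X^-1]div1r.
by rewrite lef_pV2 ?posrE ?exprn_gt0 ?divr_gt0.
Qed.

Lemma cdist0 (R : realType) (a : R) : `|a| <= pi -> cdist 0 a = `|a|.
Proof.
move=> H; rewrite /cdist sub0r normrN min_l //; lra.
Qed.

Unset Implicit Arguments.
Theorem lemma1 (R : realType) (CE c0 : R) :
  exists C1 C2 : R, forall
    (n : nat) (U : 'M[R[i]]_n) (psi : 'cV[R[i]]_n)
    (J : nat) (alpha delta : 'I_J -> R) (wp : 'I_J -> 'cV[R[i]]_n)
    (delta0 deltam : R) (w0 wm : 'cV[R[i]]_n)
    (Delta : R) (K : nat) (A : 'I_K -> 'M[R[i]]_n) (est : 'I_K -> R)
    (costE : nat)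
    (eps : R) (k : nat),
    real_mx U -> adjoint U *m U = 1%:M ->
    real_mx psi -> sqnorm psi <= 1 ->
    (forall j, 0 < alpha j < pi) -> injective alpha ->
    (forall j, U *m wp j = expi (alpha j) *: wp j /\ sqnorm (wp j) = 1) ->
    (delta0 = 0 \/ (U *m w0 = w0 /\ sqnorm w0 = 1)) ->
    (deltam = 0 \/ (U *m wm = - wm /\ sqnorm wm = 1)) ->
    psi = (delta0%:C *: w0
           + \sum_(j < J) (delta j)%:C *: (wp j + conjv (wp j))
           + deltam%:C *: wm) ->
    0 < Delta ->
    (forall x, - pi < est x <= pi) ->
    \sum_(x < K) adjoint (A x) *m A x = 1%:M ->
    (forall x, A x *m U = U *m A x) ->
    (forall (v : 'cV[R[i]]_n) (a : R), - pi < a <= pi ->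
        U *m v = expi a *: v -> sqnorm v = 1 ->
        \sum_(x < K | cdist (est x) a >= Delta) sqnorm (A x *m v) <= 1 / 3) ->
    (forall (v : 'cV[R[i]]_n), U *m v = v ->
        \sum_(x < K | est x != 0) sqnorm (A x *m v) = 0) ->
    costE%:R <= CE / Delta ->
    0 < eps ->
    ln (1 / eps) / ln 3 <= k%:R -> k%:R <= c0 * ln (1 / eps) ->
    QH_tail alpha delta deltam Delta <= eps ->
    `| detect_accept_prob k A est psi - (sqnorm psi - delta0 ^+ 2) | <= C1 * eps
    /\ (`| delta0 | = Num.sqrt (sqnorm psi) -> detect_accept_prob k A est psi = 0)
    /\ (k * costE)%:R <= C2 * ln (1 / eps) / Delta.
Proof.
exists 2, (c0 * CE).
move=> n U psi J alpha delta wp delta0 deltam w0 wm Delta K A est costE eps k.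
move=> HUr HU Hpr Hpn Halpha Hinj Hwp Hw0 Hwm Hpsi HD Hest Hcomp Hcomm HEst Hfix
  HcE Heps Hk1 Hk2 Htail.
have pi0 : 0 < (pi : R) := pi_gt0 R.
have C3 : (k * costE)%:R <= c0 * CE * ln (1 / eps) / Delta.
  rewrite natrM.
  apply: le_trans (ler_pM _ _ Hk2 HcE) _ => //.
  by rewrite le_eqVlt; apply/orP; left; apply/eqP; ring.
pose I := option (option ('I_J * bool)).
pose comp (o : I) : 'cV[R[i]]_n := match o with
  | None => delta0%:C *: w0
  | Some None => deltam%:C *: wm
  | Some (Some (j, b)) => (delta j)%:C *: (if b then wp j else conjv (wp j)) end.
pose ang (o : I) : R := match o with
  | None => 0
  | Some None => pi
  | Some (Some (j, b)) => if b then alpha j else - alpha j end.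
have Hpsi' : psi = \sum_o comp o.
  have Ep : \sum_(p : 'I_J * bool) comp (Some (Some p)) =
     \sum_j \sum_(b : bool) comp (Some (Some (j, b))).
    by rewrite pair_bigA; apply: eq_bigr => -[].
  rewrite big_opt big_opt Ep Hpsi /=.
  under [X in _ = _ + (_ + X)]eq_bigr => j _ do rewrite big_bool /= -scalerDr.
  by rewrite -addrA (addrC (deltam%:C *: wm)).
have Heig : forall o, U *m comp o = expi (ang o) *: comp o.
  case=> [[[j b]|]|] /=.
  - case: b; rewrite -scalemxAr.
      by rewrite (Hwp j).1 !scalerA mulrC.
    rewrite -{1}(real_conjv HUr) -conjv_mul (Hwp j).1 conjv_scale conj_expi.
    by rewrite !scalerA mulrC.
  - case: Hwm => [->|[H1 _]]; first by rewrite !scale0r mulmx0 scaler0.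
    by rewrite -scalemxAr H1 expipi scaleN1r scalerN.
  - case: Hw0 => [->|[H1 _]]; first by rewrite !scale0r mulmx0 scaler0.
    by rewrite -scalemxAr H1 expi0 scale1r.
have Hrange : forall o, - pi < ang o <= pi.
  case=> [[[j b]|]|] /=.
  - have := Halpha j => /andP[? ?].
    by case: b; apply/andP; split; lra.
  - by apply/andP; split; lra.
  - by apply/andP; split; lra.
have Hai : forall o o', ang o = ang o' -> o = o'.
{ case=> [[[j b]|]|] [[[j' b']|]|] /=.
  all: try (have := Halpha j => /andP[? ?]).
  all: try (have := Halpha j' => /andP[? ?]).
  all: try (case: b); try (case: b'); move=> H //.
  all: try (exfalso; move: H; lra).
  - by rewrite (Hinj _ _ H).
  - by move/eqP: H; rewrite eqr_opp => /eqP /Hinj ->. }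
have Hd : forall o o', o != o' -> expi (ang o) != expi (ang o').
  move=> o o' Hoo; apply/eqP => /(expi_inj (Hrange o) (Hrange o')) /Hai.
  by move/eqP: Hoo.
pose w (o : I) := sqnorm (comp o).
have Hw0v : w None = delta0 ^+ 2.
  rewrite /w /= sqnorm_scale; case: Hw0 => [->|[_ ->]]; last by rewrite mulr1.
  by rewrite expr0n mul0r.
have Hwjv : forall j b, w (Some (Some (j, b))) = delta j ^+ 2.
  move=> j b; rewrite /w /= sqnorm_scale; case: b; rewrite ?sqnorm_conjv (Hwp j).2 mulr1 //.
have Hwmv : w (Some None) = deltam ^+ 2.
  rewrite /w /= sqnorm_scale; case: Hwm => [->|[_ ->]]; last by rewrite mulr1.
  by rewrite expr0n mul0r.
have Hw_ge0 : forall o, 0 <= w o by move=> o; apply: sqnorm_ge0.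
have Hsq : sqnorm psi = delta0 ^+ 2 + \sum_t w (Some t).
  rewrite Hpsi' -[\sum_o comp o]mul1mx (eig_family HU (M := 1%:M) _ Heig Hd).
    by rewrite big_opt mul1mx -Hw0v; congr (_ + _); apply: eq_bigr => t _; rewrite mul1mx.
  by rewrite mul1mx mulmx1.
have HRej : Rej A est k psi = delta0 ^+ 2 + \sum_t Rej A est k (comp (Some t)).
  rewrite Hpsi' (Rej_sum est HU Hcomm k Heig Hd) big_opt; congr (_ + _).
  rewrite -Hw0v (Rej_fix Hcomp Hcomm Hfix k) //.
  by rewrite Heig /= expi0 scale1r.
pose tail (t : option ('I_J * bool)) :=
  if `|ang (Some t)| < Delta then w (Some t) else 0.
have Hbound : forall t, Rej A est k (comp (Some t)) <= tail t + (1/3) ^+ k * w (Some t).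
  move=> t; rewrite /tail; case: ltP => Hlt.
    apply: le_trans (Rej_le est Hcomp k _) _.
    by rewrite lerDl mulr_ge0 ?exprn_ge0 ?Hw_ge0 // divr_ge0 ?ler0n.
  rewrite add0r; apply: (Rej_small Hcomp Hcomm HEst k (Hrange _) (Heig _)).
  rewrite cdist0 //; have /andP[h1 h2] := Hrange (Some t).
  by rewrite ler_norml h2 andbT ltW.
have Hinv : forall x, 0 < x -> (1 / Delta < 1 / x) = (x < Delta).
  by move=> x hx; rewrite !div1r ltf_pV2 ?posrE.
have Htl : \sum_t tail t = QH_tail alpha delta deltam Delta.
  have Ep : \sum_(p : 'I_J * bool) tail (Some p) =
     \sum_j \sum_(b : bool) tail (Some (j, b)).
    by rewrite pair_bigA; apply: eq_bigr => -[].
  rewrite big_opt Ep /QH_tail addrC [in RHS]sum_cond; congr (_ + _).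
    apply: eq_bigr => j _; rewrite big_bool /tail /= normrN.
    have /andP[hj _] := Halpha j.
    rewrite Hinv // gtr0_norm // !Hwjv.
    by case: (alpha j < Delta); rewrite ?addr0 //; lra.
  by rewrite /tail /= Hinv // gtr0_norm // Hwmv.
set S := \sum_t Rej A est k (comp (Some t)).
have HS0 : 0 <= S by apply: sumr_ge0 => t _; apply: Rej_ge0.
have Hwle : \sum_t w (Some t) <= 1.
  apply: le_trans Hpn; rewrite Hsq lerDr; exact: sqr_ge0.
have Hp : (1/3) ^+ k <= eps by apply: pow3.
have Hp0 : 0 <= (1/3 : R) ^+ k by rewrite exprn_ge0 // divr_ge0 ?ler0n.
have HSle : S <= eps + (1/3) ^+ k.
  apply: le_trans (ler_sum _ (fun t _ => Hbound t)) _.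
  rewrite big_split /= -mulr_sumr Htl lerD //.
  by rewrite -[X in _ <= X]mulr1 ler_wpM2l.
split; [|split].
- rewrite (accE est Hcomp) HRej.
  have -> : sqnorm psi - (delta0 ^+ 2 + S) - (sqnorm psi - delta0 ^+ 2) = - S by ring.
  rewrite normrN ger0_norm //; lra.
- move=> H.
  have Hd0 : delta0 ^+ 2 = sqnorm psi.
    rewrite -[LHS]ger0_norm ?sqr_ge0 // normrX H sqr_sqrtr //; exact: sqnorm_ge0.
  have Hw0s : \sum_t w (Some t) = 0 by move: Hsq; rewrite -Hd0; lra.
  have HS : S = 0.
    apply: big1 => t _; apply/le_anti; rewrite Rej_ge0 andbT.
    apply: le_trans (Rej_le est Hcomp k _) _.
    by have := @psumr_eq0P _ _ _ (fun t => w (Some t)) (fun t _ => Hw_ge0 (Some t)) Hw0s t isT; rewrite /w /= => ->.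
  rewrite (accE est Hcomp) HRej; move: HS; rewrite /S => ->; by rewrite addr0 Hd0 subrr.
- exact: C3.
Qed.
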